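(* Let $(X_{i,j})_{1\le i\le g,\,1\le j\le n_i}$ be $\{0,1\}$-valued and suppose there is a probability measure $\nu$ on $[0,1]^g$ such that for all $0\le k_i\le n_i$, \[ P(S_1=k_1,\dots,S_g=k_g)=\binom{n_1}{k_1}\cdots\binom{n_g}{k_g}\int_{[0,1]^g}\prod_{i=1}^g\theta_i^{k_i}(1-\theta_i)^{n_i-k_i}\,d\nu(\theta_1,\dots,\theta_g), \] and every sequence with the same values of $(S_1,\dots,S_g)$ has the same probability. Then $\mathrm{Cov}_{k_1,\dots,k_g}=E_\nu\big[\prod_i(\theta_i-E_\nu\theta_i)^{k_i}\big]$ for all $0\le k_i\le n_i$; consequently $\mathrm{Cov}_{2k_1,\dots,2k_g}\ge0$ for all integers $0\le k_i\le\lfloor n_i/2\rfloor$; and, if $n_i\ge2$ for all $i$, the $g\times g$ matrix $C$ with $C_{ii}=\mathrm{Cov}$ with index $2$ in position $i$ and $0$ elsewhere, and $C_{ij}$ ($i\ne j$) $=\mathrm{Cov}$ with index $1$ in positions $i$ and $j$ and $0$ elsewhere, is positive semidefinite.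
   Context: $S_i=\sum_{j=1}^{n_i}X_{i,j}$. $w(i)=E[X_{i,1}]$ and $\mathrm{Cov}_{k_1,\dots,k_g}=E\Big[\prod_{i=1}^g\prod_{j=1}^{k_i}\big(X_{i,j}-w(i)\big)\Big]$. *)

(* Defs.v *)
From HB Require Import structures.
From mathcomp Require Import all_boot all_order all_algebra.
From mathcomp Require Import all_classical all_reals all_analysis.
Set Implicit Arguments. Unset Strict Implicit. Unset Printing Implicit Defensive.
Import Order.TTheory GRing.Theory Num.Theory.
Local Open Scope ring_scope.

(* Indices are 0-based: X i j (j : nat) stands for
   X_{i,j+1} of the paper. *)

Section defs.
Context {R : realType} {d : measure_display} {T : measurableType d}
  (P : probability T R) {g : nat}.

(* w(i) = E[X_{i,1}] (a finite real number since X is {0,1}-valued) *)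
Definition wmean (X : 'I_g -> nat -> {RV P >-> R}) (i : 'I_g) : R :=
  fine 'E_P[X i 0%N].

Definition Covk (X : 'I_g -> nat -> {RV P >-> R}) (k : 'I_g -> nat) : \bar R :=
  'E_P[fun t => \prod_(i < g) \prod_(j < k i) (X i j t - wmean X i)].

Definition Ssum (n : 'I_g -> nat) (X : 'I_g -> nat -> {RV P >-> R})
  (i : 'I_g) (t : T) : R := \sum_(j < n i) X i j t.
End defs.

Definition psd {R : realType} {g : nat} (M : 'M[R]_g) : Prop :=
  forall v : 'cV[R]_g, 0 <= (v^T *m M *m v) 0 0.

(* Main.v *)
Require Import Defs.
From HB Require Import structures.
From mathcomp Require Import all_boot all_order all_algebra.
From mathcomp Require Import all_classical all_reals all_analysis.
From mathcomp Require Import ring.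
Import Order.TTheory GRing.Theory Num.Theory.
Local Open Scope ring_scope.
Set Implicit Arguments. Unset Strict Implicit. Unset Printing Implicit Defensive.


Lemma pow_bool_lem (R : comPzRingType) (a b : R) (z : nat -> bool) (m : nat) :
  \prod_(j < m) (if z j then a else b) =
  a ^+ (\sum_(j < m) (z j : nat)) * b ^+ (m - \sum_(j < m) (z j : nat)).
Proof.
elim: m => [|m IH]; first by rewrite !big_ord0 !expr0 mulr1.
have hle : (\sum_(j < m) (z j : nat) <= m)%N.
  rewrite -[X in (_ <= X)%N]card_ord -sum1_card; apply: leq_sum => j _; exact: leq_b1.
rewrite !big_ord_recr /= IH.
case: (z m) => /=.
  by rewrite addn1 subSS exprSr mulrAC -mulrA mulrA.
by rewrite addn0 subSn // exprSr mulrA.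
Qed.

Lemma prod_bool_nat (R : comPzSemiRingType) (I : finType) (b : I -> bool) :
  \prod_i ((b i)%:R : R) = ([forall i, b i])%:R.
Proof.
case: (boolP [forall i, b i]) => [/forallP h|/forallP h].
  by rewrite big1 // => i _; rewrite h.
have [i hi] : exists i, ~~ b i.
  by apply/existsP; rewrite -negb_forall; apply/forallP.
by rewrite (bigD1 i) //= (negbTE hi) mul0r.
Qed.

Section comb.
Context (g : nat) (n : 'I_g -> nat).

Definition MM := (\sum_(i < g) n i).+1.

Lemma ltnMM i (j : nat) : (j < n i)%N -> (j < MM)%N.
Proof.
rewrite /MM (bigD1 i) //= => h; apply: leq_trans (leqnSn _).
exact: leq_trans h (leq_addr _ _).
Qed.

Lemma leqMM i : (n i <= MM)%N.
Proof. by rewrite /MM (bigD1 i) //=; apply: leq_trans (leqnSn _); rewrite leq_addr. Qed.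

Definition Conf := {ffun 'I_g -> {ffun 'I_MM -> bool}}.
Definition Qi (i : 'I_g) : pred {ffun 'I_MM -> bool} :=
  fun y => [forall j : 'I_MM, y j ==> (j < n i)%N].
Definition sumy (i : 'I_g) (y : {ffun 'I_MM -> bool}) : nat :=
  \sum_(j < n i) (y (inord j) : nat).
Definition xd (x : Conf) : forall i : 'I_g, 'I_(n i) -> bool :=
  fun i j => x i (inord j).

Lemma Qi_out i y (j : 'I_MM) : Qi i y -> (n i <= j)%N -> y j = false.
Proof.
move=> /forallP /(_ j); case: (y j) => //= h hn.
by move: (leq_trans h hn); rewrite ltnn.
Qed.

Section R.
Variable R : comPzRingType.

Lemma distr_conf (K : 'I_g -> nat -> bool -> R) :
  \sum_(x in family Qi) \prod_i \prod_(j : 'I_MM) K i j (x i j) =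
  \prod_i \prod_(j : 'I_MM)
    (if (j < n i)%N then K i j true + K i j false else K i j false).
Proof.
rewrite -(bigA_distr_big_dep _ (fun i (y : {ffun 'I_MM -> bool}) => \prod_(j : 'I_MM) K i j (y j))).
apply: eq_bigr => i _.
pose Q' : 'I_MM -> pred bool := fun j b => (j < n i)%N || ~~ b.
have -> : \sum_(y | Qi i y) \prod_(j : 'I_MM) K i j (y j) =
          \sum_(y in family Q') \prod_(j : 'I_MM) K i j (y j).
  apply: eq_bigl => y; apply/idP/idP.
    move=> /forallP h; apply/familyP => j; move: (h j).
    by rewrite unfold_in; case: (y j) => /=; rewrite ?orbT // orbF.
  move=> /familyP h; apply/forallP => j; move: (h j).
  by rewrite unfold_in; case: (y j) => /=; rewrite ?orbF // implybT.
rewrite -(bigA_distr_big_dep _ (fun (j : 'I_MM) (b : bool) => K i j b)).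
apply: eq_bigr => j _.
rewrite big_mkcond big_bool /Q' /=.
by case: (j < n i)%N => /=; rewrite ?add0r.
Qed.

Lemma pow_conf (a b : R) i y : Qi i y ->
  \prod_(j : 'I_MM) (if (j < n i)%N then (if y j then a else b) else 1) =
  a ^+ sumy i y * b ^+ (n i - sumy i y).
Proof.
move=> _.
rewrite /sumy -(pow_bool_lem a b (fun j => y (inord j))).
rewrite (big_ord_widen MM (fun j => if y (inord j) then a else b) (leqMM i)).
rewrite [RHS]big_mkcond /=; apply: eq_bigr => j _.
by rewrite inord_val.
Qed.

End R.

Lemma sumy_set i (A : {set 'I_(n i)}) :
  sumy i [ffun j : 'I_MM => if insub (val j) is Some j' then j' \in A else false]
  = #|A|.
Proof.
rewrite /sumy -sum1_card [RHS]big_mkcond /=; apply: eq_bigr => j _.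
rewrite ffunE inordK; last exact: ltnMM (ltn_ord j).
by rewrite valK; case: (j \in A).
Qed.

Lemma count_conf_i i k : (k <= n i)%N ->
  #|[pred y | Qi i y && (sumy i y == k)]| = 'C(n i, k).
Proof.
move=> hk.
rewrite -[n i]card_ord -card_draws.
pose phi (A : {set 'I_(n i)}) : {ffun 'I_MM -> bool} :=
  [ffun j : 'I_MM => if insub (val j) is Some j' then j' \in A else false].
pose psi (y : {ffun 'I_MM -> bool}) : {set 'I_(n i)} :=
  [set j' : 'I_(n i) | y (inord j')].
rewrite -!sum1_card.
rewrite (reindex phi); last first.
  exists psi => [A _|y].
    apply/setP => j; rewrite inE ffunE (_ : val (inord j : 'I_MM) = j); last by apply: inordK; exact: ltnMM (ltn_ord j).
    by rewrite valK.
  rewrite inE => /andP [hq _]; apply/ffunP => j; rewrite ffunE.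
  case: insubP => [j' hj hv|hj].
    rewrite inE; congr (y _); apply: val_inj; rewrite /= inordK ?hv //.
    exact: ltn_ord j.
  by rewrite (Qi_out hq) // leqNgt.
apply: eq_bigl => A; rewrite !inE /phi /= sumy_set andbC.
case: (#|A| == k) => //=.
apply/forallP => j; rewrite ffunE; case: insubP => // j' _ <-.
by rewrite ltn_ord implybT.
Qed.

Lemma count_conf (R : comPzRingType) (k : 'I_g -> nat) : (forall i, (k i <= n i)%N) ->
  (\sum_(x in family Qi | [forall i, sumy i (x i) == k i]) (1 : R)) =
  (\prod_i 'C(n i, k i))%:R.
Proof.
move=> hk.
rewrite big_mkcondr /=.
transitivity (\sum_(x in family Qi) \prod_i (((sumy i (x i) == k i))%:R : R)).
  by apply: eq_bigr => x _; rewrite prod_bool_nat; case: ifP.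
rewrite -(bigA_distr_big_dep _ (fun i y => ((sumy i y == k i))%:R : R)).
rewrite natr_prod; apply: eq_bigr => i _.
rewrite -count_conf_i // -sum1_card natr_sum big_mkcondr /=.
by apply: eq_bigr => y _; case: (_ == _).
Qed.

Definition x0 (k : 'I_g -> nat) : Conf := [ffun i => [ffun j : 'I_MM => (j < k i)%N]].

Lemma x0_fam k : (forall i, (k i <= n i)%N) -> x0 k \in family Qi.
Proof.
move=> hk; apply/familyP => i; apply/forallP => j; rewrite !ffunE.
by apply/implyP => h; exact: leq_trans h (hk i).
Qed.

Lemma x0_sum k : (forall i, (k i <= n i)%N) -> forall i, sumy i (x0 k i) = k i.
Proof.
move=> hk i; rewrite /sumy.
transitivity (\sum_(j < n i) ((j < k i)%N : nat)).
  apply: eq_bigr => j _; rewrite !ffunE inordK //; exact: ltnMM (ltn_ord j).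
rewrite -big_mkcondr /= -(big_ord_widen _ (fun _ => 1%N) (hk i)).
by rewrite sum1_card card_ord.
Qed.

Lemma sumy_le i y : (sumy i y <= n i)%N.
Proof.
rewrite /sumy -[X in (_ <= X)%N]card_ord -sum1_card; apply: leq_sum => j _; exact: leq_b1.
Qed.

End comb.
Arguments xd {g n} x i j.
Arguments Qi {g} n i.


Section nu_side.
Context (R : realType) (g : nat) (nu : probability (g.-tuple R) R).

Definition Dc : set (g.-tuple R) :=
  [set th | forall i : 'I_g, 0 <= tnth th i <= 1]%classic.

Lemma Dc_meas : measurable Dc.
Proof.
have -> : Dc = (\bigcap_(i in [set: 'I_g]) ((fun th => tnth th i) @^-1` `[0, 1]))%classic.
  apply/seteqP; split => th /= h.
    by move=> i _; rewrite /= in_itv /=; exact: h.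
  by move=> i; have := h i I; rewrite /= in_itv.
apply: fin_bigcap_measurable; first exact: finite_finset.
move=> i _; rewrite -[X in measurable X]setTI.
by apply: measurable_tnth => //; exact: measurable_itv.
Qed.

Definition nice (h : g.-tuple R -> R) :=
  measurable_fun setT h /\ exists B, forall th, Dc th -> `|h th| <= B.

Lemma nice_ext f h : (forall th, f th = h th) -> nice f -> nice h.
Proof. by move=> e; have -> : f = h by apply: funext. Qed.

Lemma nice_cst c : nice (fun _ => c).
Proof. by split; [exact: measurable_cst | exists `|c|]. Qed.

Lemma nice_tnth i : nice (fun th => tnth th i).
Proof.
split; first exact: measurable_tnth.
exists 1 => th /(_ i) /andP [h0 h1]; by rewrite ger0_norm.
Qed.

Lemma nice_add f h : nice f -> nice h -> nice (fun th => f th + h th).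
Proof.
move=> [mf [B1 hB1]] [mh [B2 hB2]]; split.
  exact: measurable_realfun.measurable_funD.
exists (B1 + B2) => th Dth; apply: le_trans (ler_normD _ _) _.
by apply: lerD; [exact: hB1|exact: hB2].
Qed.

Lemma nice_mul f h : nice f -> nice h -> nice (fun th => f th * h th).
Proof.
move=> [mf [B1 hB1]] [mh [B2 hB2]]; split.
  exact: measurable_realfun.measurable_funM.
exists (B1 * B2) => th Dth; rewrite normrM.
exact: (ler_pM (normr_ge0 _) (normr_ge0 _) (hB1 _ Dth) (hB2 _ Dth)).
Qed.

Lemma nice_opp f : nice f -> nice (fun th => - f th).
Proof.
move=> nf; apply: (nice_ext _ (nice_mul (nice_cst (-1)) nf)) => th.
by rewrite mulN1r.
Qed.

Lemma nice_prod (I : Type) (r : seq I) (P : pred I) (f : I -> g.-tuple R -> R) :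
  (forall i, nice (f i)) -> nice (fun th => \prod_(i <- r | P i) f i th).
Proof.
move=> hf; elim: r => [|a r IH].
  by apply: (nice_ext _ (nice_cst 1)) => th; rewrite big_nil.
case: (boolP (P a)) => Pa.
  by apply: (nice_ext _ (nice_mul (hf a) IH)) => th; rewrite big_cons Pa.
by apply: (nice_ext _ IH) => th; rewrite big_cons (negbTE Pa).
Qed.

Lemma nice_sum (I : Type) (r : seq I) (P : pred I) (f : I -> g.-tuple R -> R) :
  (forall i, nice (f i)) -> nice (fun th => \sum_(i <- r | P i) f i th).
Proof.
move=> hf; elim: r => [|a r IH].
  by apply: (nice_ext _ (nice_cst 0)) => th; rewrite big_nil.
case: (boolP (P a)) => Pa.
  by apply: (nice_ext _ (nice_add (hf a) IH)) => th; rewrite big_cons Pa.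
by apply: (nice_ext _ IH) => th; rewrite big_cons (negbTE Pa).
Qed.

Lemma nice_exp f k : nice f -> nice (fun th => f th ^+ k).
Proof.
move=> nf; elim: k => [|k IH].
  by apply: (nice_ext _ (nice_cst 1)) => th; rewrite expr0.
by apply: (nice_ext _ (nice_mul nf IH)) => th; rewrite exprS.
Qed.

Lemma nice_if (c : bool) f h : nice f -> nice h -> nice (fun th => if c then f th else h th).
Proof. by case: c. Qed.

Hypothesis nuD : nu Dc = 1%E.

Lemma nuDC : nu (~` Dc)%classic = 0%E.
Proof. by rewrite probability_setC ?nuD ?subee //; exact: Dc_meas. Qed.

Lemma nice_int h : nice h -> nu.-integrable setT (EFin \o h).
Proof.
move=> [mh [B hB]].
have mE := (measurable_realfun.measurable_EFinP _ _).2 mh.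
have mN : measurable_fun setT (Num.norm \o h) by exact: measurableT_comp.
have mA := (measurable_realfun.measurable_EFinP _ _).2 mN.
apply/integrableP; split; first exact: mE.
rewrite (eq_integral (fun x => (`|h x|)%:E)); last by move=> x _.
rewrite (@ge0_negligible_integral _ _ _ nu setT (~` Dc)%classic) //; first last.
- exact: nuDC.
- exact: measurableC Dc_meas.
rewrite setTD setCK.
apply: (@le_lt_trans _ _ (\int[nu]_(x in Dc) (cst `|B|%:E) x)%E).
  apply: ge0_le_integral => //.
  - exact: Dc_meas.
  - exact: measurable_funS mA.
  - by move=> th Dth /=; rewrite lee_fin; exact: le_trans (hB _ Dth) (ler_norm B).
rewrite integral_cst; last exact: Dc_meas.
first [by rewrite (_ : nu Dc = 1%E) ?mule1 ?ltry | by move: nuD => /= ->; rewrite mule1 ltry | by apply: lte_mul_pinfty => //; rewrite -ge0_fin_numE // fin_num_measure //; exact: Dc_meas].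
Qed.

End nu_side.
Arguments nice_cst {R g} c.
Arguments nice_tnth {R g} i.


Section P_side.
Context (R : realType) (d : measure_display) (T : measurableType d)
  (P : probability T R) (g : nat) (n : 'I_g -> nat)
  (X : 'I_g -> nat -> {RV P >-> R}).
Hypothesis H01 : forall (i : 'I_g) (j : 'I_(n i)) (t : T), X i j t = 0 \/ X i j t = 1.

Definition xt (t : T) : Conf n :=
  [ffun i => [ffun j : 'I_(MM n) => (j < n i)%N && (X i j t == 1)]].
Definition Ev (x : Conf n) : set T :=
  [set t | forall (i : 'I_g) (j : 'I_(n i)), X i j t = (xd x i j)%:R]%classic.

Lemma X_xt t i (j : nat) : (j < n i)%N -> X i j t = (xt t i (inord j))%:R.
Proof.
move=> hj; rewrite !ffunE inordK ?hj /=; last exact: ltnMM hj.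
by case: (H01 (Ordinal hj) t) => /= ->; rewrite ?eqxx // eq_sym oner_eq0.
Qed.

Lemma xt_fam t : xt t \in family (Qi n).
Proof.
apply/familyP => i; rewrite unfold_in; apply/forallP => j; rewrite !ffunE; apply/implyP => /andP [].
by case: (j < n i)%N.
Qed.

Lemma Ev_xt x : x \in family (Qi n) -> forall t, Ev x t <-> xt t = x.
Proof.
move=> /familyP hx t; split.
- move=> h; apply/ffunP => i; apply/ffunP => j; rewrite !ffunE.
  have hxi : Qi n i (x i) by move: (hx i); rewrite unfold_in.
  case: (ltnP j (n i)) => hj /=.
  + have := h i (Ordinal hj); rewrite /xd /= => ->.
    rewrite (_ : inord j = j); last by apply: val_inj; rewrite /= inordK.
    by case: (x i j); rewrite /= ?eqxx // eq_sym oner_eq0.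
  + by rewrite (Qi_out hxi).
- by move=> <- i j; rewrite /xd; exact: X_xt (ltn_ord j).
Qed.

Lemma Ev_meas x : measurable (Ev x).
Proof.
have -> : Ev x = (\bigcap_(i in [set: 'I_g]) \bigcap_(j in [set: 'I_(n i)])
    ((X i j) @^-1` [set (xd x i j)%:R]))%classic.
  by apply/seteqP; split => t /= h; [move=> i _ j _; exact: h | move=> i j; exact: h i I j I].
apply: fin_bigcap_measurable; first exact: finite_finset.
move=> i _; apply: fin_bigcap_measurable; first exact: finite_finset.
by move=> j _; apply: measurable_funPTI; exact: measurable_set1.
Qed.

Lemma EP_conf (F : Conf n -> R) :
  (\int[P]_t (F (xt t))%:E = \sum_(x in family (Qi n)) (F x)%:E * P (Ev x))%E.
Proof.
have pw t : F (xt t) = \sum_(x in family (Qi n)) F x * \1_(Ev x) t.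
  rewrite (bigD1 (xt t)) ?xt_fam //= big1 ?addr0.
    by rewrite indicE mem_set ?mulr1 //; exact/(Ev_xt (xt_fam t)).
  move=> x /andP [hx hne]; rewrite indicE memNset ?mulr0 //.
  by move/(Ev_xt hx) => e; rewrite e eqxx in hne.
under eq_integral do rewrite pw -sumEFin.
rewrite integral_sum //; last first.
  move=> x; under eq_fun do rewrite EFinM.
  apply: integrableZl => //; exact: integrable_indic (Ev_meas x).
apply: eq_bigr => x _; under eq_integral do rewrite EFinM.
rewrite integralZl //; last exact: integrable_indic (Ev_meas x).
by rewrite integral_indic ?setIT //; exact: Ev_meas.
Qed.

End P_side.


Section Main.
Context (R : realType) (d : measure_display) (T : measurableType d)
  (P : probability T R) (g : nat) (n : 'I_g -> nat)
  (X : 'I_g -> nat -> {RV P >-> R})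
  (nu : probability (g.-tuple R) R).
Hypothesis H01 : forall (i : 'I_g) (j : 'I_(n i)) (t : T), X i j t = 0 \/ X i j t = 1.
Hypothesis nuD : nu [set th : g.-tuple R | forall i : 'I_g, 0 <= tnth th i <= 1]%classic = 1%E.
Hypothesis Hmix : (forall k : 'I_g -> nat, (forall i, (k i <= n i)%N) ->
     P [set t | forall i : 'I_g, Ssum n X i t = (k i)%:R]%classic =
     ((\prod_(i < g) ('C(n i, k i))%:R)%:E *
      \int[nu]_th (\prod_(i < g) (tnth th i ^+ k i * (1 - tnth th i) ^+ (n i - k i)))%:E)%E).
Hypothesis Hexch : (forall x y : forall i : 'I_g, 'I_(n i) -> bool,
     (forall i, (\sum_(j < n i) (x i j : nat) = \sum_(j < n i) (y i j : nat))%N) ->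
     P [set t | forall (i : 'I_g) (j : 'I_(n i)), X i j t = (x i j)%:R]%classic =
     P [set t | forall (i : 'I_g) (j : 'I_(n i)), X i j t = (y i j)%:R]%classic).

Definition Lf (x : Conf n) (th : g.-tuple R) : R :=
  \prod_i \prod_(j : 'I_(MM n))
    (if (j < n i)%N then (if x i j then tnth th i else 1 - tnth th i) else 1).

Lemma nice_Lf x : nice (Lf x).
Proof.
apply: nice_prod => i; apply: nice_prod => j.
apply: nice_if; last exact: nice_cst.
apply: nice_if; first exact: nice_tnth.
exact (nice_add (nice_cst 1) (nice_opp (nice_tnth i))).
Qed.

Lemma Ssum_xt t i : Ssum n X i t = (sumy i (xt n X t i))%:R.
Proof.
rewrite /Ssum /sumy natr_sum; apply: eq_bigr => j _.
by rewrite (X_xt H01 t (ltn_ord j)).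
Qed.

Lemma mixture x : x \in family (Qi n) -> P (Ev X x) = (\int[nu]_th (Lf x th)%:E)%E.
Proof.
move=> hx.
pose k := fun i => sumy i (x i).
have hk : forall i, (k i <= n i)%N by move=> i; exact: sumy_le.
have := Hmix hk.
pose S := [set t | forall i : 'I_g, Ssum n X i t = (k i)%:R]%classic.
have mS : measurable S.
  have -> : S = (\bigcap_(i in [set: 'I_g]) (Ssum n X i @^-1` [set (k i)%:R]))%classic.
    by apply/seteqP; split => t /= h; [move=> i _; exact: h | move=> i; exact: h i I].
  apply: fin_bigcap_measurable; first exact: finite_finset.
  move=> i _; rewrite -[X in measurable X]setTI.
  have mf : measurable_fun setT (Ssum n X i).
    by apply: measurable_sum => j; exact: measurable_funPT.
  exact: mf measurableT _ (measurable_set1 _).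
have -> : P S = (\int[P]_t ((fun y : Conf n => ([forall i, sumy i (y i) == k i])%:R) (xt n X t))%:E)%E.
  rewrite -(setIT S) -integral_indic //; apply: eq_integral => t _.
  rewrite indicE /=; congr (EFin (_ %:R)).
  case: (boolP [forall i, _]) => /forallP h.
    rewrite mem_set // => i; rewrite Ssum_xt; apply/eqP; rewrite eqr_nat; exact: h.
  rewrite memNset // => hS; apply: h => i; move: (hS i).
  by rewrite Ssum_xt => /eqP; rewrite eqr_nat.
rewrite (EP_conf H01 (fun y : Conf n => ([forall i, sumy i (y i) == k i])%:R)).
set N := \prod_(i < g) 'C(n i, k i).
have fp : P (Ev X x) = (fine (P (Ev X x)))%:E.
  by rewrite fineK // fin_num_measure //; exact: Ev_meas.
have -> : (\sum_(y in family (Qi n))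
     (([forall i, sumy i (y i) == k i]%:R)%:E * P (Ev X y)))%E =
     ((N%:R : R) * fine (P (Ev X x)))%:E.
  transitivity (\sum_(y in family (Qi n) | [forall i, sumy i (y i) == k i]) P (Ev X x))%E.
    rewrite big_mkcondr /=; apply: eq_bigr => y hy.
    case: ifP => h; last by rewrite mul0e.
    rewrite mul1e; apply: Hexch => i; exact: (eqP (forallP h i)).
  rewrite fp sumEFin; congr EFin.
  by rewrite -(count_conf R (fun i => sumy_le i (x i))) mulr_suml; apply: eq_bigr => *; rewrite mul1r.
have -> : (\int[nu]_th
      (\prod_(i < g) (tnth th i ^+ k i * (1 - tnth th i) ^+ (n i - k i)))%:E)%E =
      (\int[nu]_th (Lf x th)%:E)%E.
  apply: eq_integral => th _; congr EFin; rewrite /Lf; apply: eq_bigr => i _.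
  rewrite pow_conf //; move/familyP: hx => /(_ i); by rewrite unfold_in.
rewrite -natr_prod -/N => h.
have N0 : (N%:R : R) != 0.
  rewrite pnatr_eq0 -lt0n; apply: prodn_gt0 => i; rewrite bin_gt0; exact: sumy_le.
have := congr1 (fun z => ((N%:R : R)^-1)%:E * z)%E h.
by rewrite /= -EFinM mulKf // muleA -EFinM mulVf // mul1e -fp.
Qed.

Lemma master (G : 'I_g -> nat -> bool -> R) :
  (\int[P]_t (\prod_i \prod_(j : 'I_(MM n)) G i j (xt n X t i j))%:E =
   \int[nu]_th (\prod_i \prod_(j : 'I_(MM n))
      (if (j < n i)%N then tnth th i * G i j true + (1 - tnth th i) * G i j false
       else G i j false))%:E)%E.
Proof.
pose F := fun x : Conf n => \prod_i \prod_(j : 'I_(MM n)) G i j (x i j).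
rewrite (EP_conf H01 F).
transitivity (\sum_(x in family (Qi n)) \int[nu]_th ((F x * Lf x th)%:E))%E.
  apply: eq_bigr => x hx; rewrite mixture // -integralZl //.
  exact (nice_int nuD (nice_Lf x)).
rewrite -integral_sum //; last first.
  move=> x; exact (nice_int nuD (nice_mul (nice_cst _) (nice_Lf x))).
apply: eq_integral => th _; rewrite sumEFin; congr EFin.
transitivity (\sum_(x in family (Qi n)) \prod_i \prod_(j : 'I_(MM n))
   (G i j (x i j) * (if (j < n i)%N then (if x i j then tnth th i else 1 - tnth th i) else 1))).
  apply: eq_bigr => x _; rewrite /F /Lf -big_split; apply: eq_bigr => i _.
  by rewrite -big_split.
rewrite (distr_conf n (fun i (j : nat) b => G i j b *
   (if (j < n i)%N then (if b then tnth th i else 1 - tnth th i) else 1))).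
apply: eq_bigr => i _; apply: eq_bigr => j _.
by case: (j < n i)%N => /=; rewrite ?mulr1 // mulrC [G i j false * _]mulrC.
Qed.

End Main.


Section Final.
Context (R : realType) (d : measure_display) (T : measurableType d)
  (P : probability T R) (g : nat) (n : 'I_g -> nat)
  (X : 'I_g -> nat -> {RV P >-> R})
  (nu : probability (g.-tuple R) R).
Hypothesis H01 : forall (i : 'I_g) (j : 'I_(n i)) (t : T), X i j t = 0 \/ X i j t = 1.
Hypothesis nuD : nu [set th : g.-tuple R | forall i : 'I_g, 0 <= tnth th i <= 1]%classic = 1%E.
Hypothesis Hmix : (forall k : 'I_g -> nat, (forall i, (k i <= n i)%N) ->
     P [set t | forall i : 'I_g, Ssum n X i t = (k i)%:R]%classic =
     ((\prod_(i < g) ('C(n i, k i))%:R)%:E *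
      \int[nu]_th (\prod_(i < g) (tnth th i ^+ k i * (1 - tnth th i) ^+ (n i - k i)))%:E)%E).
Hypothesis Hexch : (forall x y : forall i : 'I_g, 'I_(n i) -> bool,
     (forall i, (\sum_(j < n i) (x i j : nat) = \sum_(j < n i) (y i j : nat))%N) ->
     P [set t | forall (i : 'I_g) (j : 'I_(n i)), X i j t = (x i j)%:R]%classic =
     P [set t | forall (i : 'I_g) (j : 'I_(n i)), X i j t = (y i j)%:R]%classic).

Let mast := master H01 nuD Hmix Hexch.

Lemma cov_formula k : (forall i, (k i <= n i)%N) ->
  Covk X k = (\int[nu]_th (\prod_i (tnth th i - wmean X i) ^+ k i)%:E)%E.
Proof.
move=> hk; rewrite /Covk unlock.
pose G i (j : nat) (b : bool) := if (j < k i)%N then (b%:R - wmean X i) else 1.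
transitivity (\int[P]_t (\prod_i \prod_(j : 'I_(MM n)) G i j (xt n X t i j))%:E)%E.
  apply: eq_integral => t _; congr EFin; apply: eq_bigr => i _.
  rewrite (big_ord_widen (MM n) (fun j => X i j t - wmean X i) (leq_trans (hk i) (leqMM n i))).
  rewrite big_mkcond /=; apply: eq_bigr => j _; rewrite /G.
  case: ifP => // hj.
  by rewrite (X_xt H01 t (leq_trans hj (hk i))) inord_val.
rewrite mast; apply: eq_integral => th _; congr EFin; apply: eq_bigr => i _.
rewrite -[k i]card_ord -prodr_const.
rewrite (big_ord_widen (MM n) (fun _ => tnth th i - wmean X i) (leq_trans (hk i) (leqMM n i))).
rewrite [RHS]big_mkcond /=; apply: eq_bigr => j _; rewrite /G.
case: (ltnP j (k i)) => hj.
  rewrite (leq_trans hj (hk i)) /=; ring.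
by case: (j < n i)%N => //; ring.
Qed.
Lemma mean_formula i : (0 < n i)%N ->
  wmean X i = fine ('E_nu[fun th => tnth th i])%E.
Proof.
move=> hn; rewrite /wmean !unlock; congr fine.
have hM : (0 < MM n)%N by [].
pose j0 : 'I_(MM n) := Ordinal hM.
pose G (i' : 'I_g) (j : nat) (b : bool) := if (i' == i) && (j == 0)%N then (b : nat)%:R else (1 : R).
have key : forall (F : 'I_g -> 'I_(MM n) -> R),
    (forall i' j, (i' != i) || (val j != 0)%N -> F i' j = 1) ->
    \prod_i' \prod_(j : 'I_(MM n)) F i' j = F i j0.
  move=> F hF; rewrite (bigD1 i) //= [X in _ * X]big1 ?mulr1; last first.
    by move=> i' hi'; apply: big1 => j _; apply: hF; rewrite hi'.
  rewrite (bigD1 j0) //= [X in _ * X]big1 ?mulr1 // => j hj; apply: hF; apply/orP; right.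
  by apply: contra hj => /eqP hj0; apply/eqP; apply: val_inj.
transitivity (\int[P]_t (\prod_i' \prod_(j : 'I_(MM n)) G i' j (xt n X t i' j))%:E)%E.
  apply: eq_integral => t _; congr EFin; rewrite key; last first.
    by move=> i' j /orP [h|h]; rewrite /G; [rewrite (negbTE h) | rewrite (negbTE h) andbF].
  rewrite /G eqxx /= (X_xt H01 t hn); congr (_ %:R); congr (xt n X t i _).
  by apply: val_inj; rewrite /= inordK.
rewrite mast; apply: eq_integral => th _; congr EFin; rewrite key; last first.
  move=> i' j /orP [h|h]; rewrite /G; [rewrite (negbTE h) | rewrite (negbTE h) andbF];
  by rewrite /=; case: ifP => _ //; ring.
by rewrite /G eqxx /= hn; ring.
Qed.

Lemma E_def (f : g.-tuple R -> R) : ('E_nu[f] = \int[nu]_th (f th)%:E)%E.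
Proof. by rewrite unlock. Qed.

Definition mth i := fine ('E_nu[fun th' : g.-tuple R => tnth th' i])%E.

Lemma claim1 k : (forall i, (k i <= n i)%N) ->
  Covk X k = ('E_nu[fun th =>
            (\prod_(i < g) (tnth th i - fine 'E_nu[fun th' => tnth th' i]) ^+ k i)%R])%E.
Proof.
move=> hk; rewrite cov_formula // [RHS]E_def; apply: eq_integral => th _; congr EFin.
apply: eq_bigr => i _.
case hki: (k i) => [|k']; first by rewrite !expr0.
rewrite mean_formula //; have := hk i; rewrite hki; exact: leq_trans.
Qed.

Lemma claim2 k : (forall i, (k i <= (n i)./2)%N) -> (0 <= Covk X (fun i => (2 * k i)%N))%E.
Proof.
move=> hk; rewrite claim1; last first.
  by move=> i; rewrite mul2n -geq_half_double.
rewrite E_def; apply: integral_ge0 => th _; rewrite lee_fin.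
apply: prodr_ge0 => i _; rewrite exprM; apply: exprn_ge0; exact: sqr_ge0.
Qed.

Lemma claim3 : (forall i, (2 <= n i)%N) ->
  psd (\matrix_(i < g, j < g)
                fine (Covk X (fun l : 'I_g =>
                        if i == j then (if l == i then 2%N else 0%N)
                        else (if (l == i) || (l == j) then 1%N else 0%N)))).
Proof.
move=> hn v.
pose f := fun (i : 'I_g) (th : g.-tuple R) => tnth th i - mth i.
have nf : forall i, nice (f i).
  move=> i; exact (nice_add (nice_tnth i) (nice_opp (nice_cst _))).
have nff : forall i j c, nice (fun th => c * (f i th * f j th)).
  move=> i j c; exact (nice_mul (nice_cst c) (nice_mul (nf i) (nf j))).
pose c i j := fine (\int[nu]_th (f i th * f j th)%:E)%E.
have cfin : forall i j, (\int[nu]_th (f i th * f j th)%:E)%E = (c i j)%:E.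
  move=> i j; rewrite fineK //; apply: integrable_fin_num => //.
  exact (nice_int nuD (nice_mul (nf i) (nf j))).
have entry : forall i j, fine (Covk X (fun l : 'I_g =>
                        if i == j then (if l == i then 2%N else 0%N)
                        else (if (l == i) || (l == j) then 1%N else 0%N))) = c i j.
  move=> i j; rewrite claim1; last first.
    move=> l; apply: leq_trans (hn l).
    by case: (i == j); [case: (l == i) | case: (_ || _)].
  rewrite E_def /c; congr fine; apply: eq_integral => th _; congr EFin.
  case: (eqVneq i j) => [<-|hij].
    rewrite (bigD1 i) //= eqxx [X in _ * X]big1 ?mulr1 ?expr2 //.
    by move=> l /negbTE ->; exact: expr0.
  rewrite (bigD1 i) //= eqxx /= (bigD1 j) /=; last by rewrite eq_sym.
  rewrite eqxx orbT [X in _ * (_ * X)]big1 ?mulr1 ?expr1 //.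
  by move=> l /andP [/negbTE -> /negbTE ->]; exact: expr0.
have -> : (v^T *m \matrix_(i < g, j < g)
                fine (Covk X (fun l : 'I_g =>
                        if i == j then (if l == i then 2%N else 0%N)
                        else (if (l == i) || (l == j) then 1%N else 0%N))) *m v) 0 0
    = \sum_j \sum_i (v i 0 * v j 0) * c i j.
  rewrite mxE; apply: eq_bigr => j _; rewrite mxE big_distrl /=; apply: eq_bigr => i _.
  by rewrite !mxE entry; ring.
rewrite -lee_fin.
have <- : (\int[nu]_th ((\sum_i v i 0 * f i th) ^+ 2)%:E)%E =
          (\sum_j \sum_i (v i 0 * v j 0) * c i j)%:E.
  rewrite (eq_integral (fun th => \sum_j (\sum_i (v i 0 * v j 0) * (f i th * f j th))%:E)); last first.
    move=> th _; rewrite sumEFin expr2 big_distrlr /= exchange_big /=; congr EFin.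
    by apply: eq_bigr => j _; apply: eq_bigr => i _; ring.
  rewrite integral_sum //; last first.
    move=> j; exact (nice_int nuD (nice_sum (index_enum 'I_g) xpredT (fun i => nff i j (v i 0 * v j 0)))).
  rewrite -sumEFin; apply: eq_bigr => j _.
  rewrite (eq_integral (fun th => \sum_i ((v i 0 * v j 0) * (f i th * f j th))%:E)); last first.
    by move=> th _; rewrite sumEFin.
  rewrite integral_sum //; last first.
    move=> i; exact (nice_int nuD (nff i j (v i 0 * v j 0))).
  rewrite -sumEFin; apply: eq_bigr => i _.
  rewrite (eq_integral (fun th => ((v i 0 * v j 0)%:E * (f i th * f j th)%:E)%E)); last first.
    by move=> th _; rewrite EFinM.
  rewrite integralZl //; last exact (nice_int nuD (nice_mul (nf i) (nf j))).
  by rewrite cfin EFinM.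
apply: integral_ge0 => th _; rewrite lee_fin; exact: sqr_ge0.
Qed.

End Final.

Unset Implicit Arguments.

Theorem mainTheorem6 (R : realType) (d : measure_display) (T : measurableType d)
  (P : probability T R) (g : nat) (n : 'I_g -> nat)
  (X : 'I_g -> nat -> {RV P >-> R})
  (nu : probability (g.-tuple R) R) :
  (* X_{i,j} is {0,1}-valued *)
  (forall (i : 'I_g) (j : 'I_(n i)) (t : T), X i j t = 0 \/ X i j t = 1) ->
  (* nu is a probability measure on [0,1]^g *)
  nu [set th : g.-tuple R | forall i : 'I_g, 0 <= tnth th i <= 1]%classic = 1%E ->
  (* binomial-mixture representation of the law of (S_1,...,S_g) *)
  (forall k : 'I_g -> nat, (forall i, (k i <= n i)%N) ->
     P [set t | forall i : 'I_g, Ssum n X i t = (k i)%:R]%classic =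
     ((\prod_(i < g) ('C(n i, k i))%:R)%:E *
      \int[nu]_th (\prod_(i < g) (tnth th i ^+ k i * (1 - tnth th i) ^+ (n i - k i)))%:E)%E) ->
  (* every 0/1 sequence with the same (S_1,...,S_g) has the same probability *)
  (forall x y : forall i : 'I_g, 'I_(n i) -> bool,
     (forall i, (\sum_(j < n i) (x i j : nat) = \sum_(j < n i) (y i j : nat))%N) ->
     P [set t | forall (i : 'I_g) (j : 'I_(n i)), X i j t = (x i j)%:R]%classic =
     P [set t | forall (i : 'I_g) (j : 'I_(n i)), X i j t = (y i j)%:R]%classic) ->
  [/\ (forall k : 'I_g -> nat, (forall i, (k i <= n i)%N) ->
         Covk X k =
         ('E_nu[fun th =>
            (\prod_(i < g) (tnth th i - fine 'E_nu[fun th' => tnth th' i]) ^+ k i)%R])%E),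
      (forall k : 'I_g -> nat, (forall i, (k i <= (n i)./2)%N) ->
         (0 <= Covk X (fun i => (2 * k i)%N))%E)
    & ((forall i, (2 <= n i)%N) ->
         psd (\matrix_(i < g, j < g)
                fine (Covk X (fun l : 'I_g =>
                        if i == j then (if l == i then 2%N else 0%N)
                        else (if (l == i) || (l == j) then 1%N else 0%N)))))].
Proof.
move=> H01 nuD Hmix Hexch; split.
- exact: (claim1 H01 nuD Hmix Hexch).
- exact: (claim2 H01 nuD Hmix Hexch).
- exact: (claim3 H01 nuD Hmix Hexch).
Qed.
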